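(* In the setting below, let $a,b\in\mathbb{C}$ be such that $aI+\Gamma$ and $bI+\Gamma$ are invertible, and suppose $I+M(n,m)$ is invertible for all $(n,m)\in\mathbb{Z}^2$. Then $S(a,b)=c\,(bI+\Gamma)^{-1}(I+M)^{-1}(aI+\Gamma)^{-1}r$ satisfies the NQC equation $$\frac{1-(p+b)\hat{\tilde S}(a,b)+(p-a)\hat S(a,b)}{1-(q+b)\hat{\tilde S}(a,b)+(q-a)\tilde S(a,b)}=\frac{1-(q+a)\hat S(a,b)+(q-b)S(a,b)}{1-(p+a)\tilde S(a,b)+(p-b)S(a,b)}$$ (wherever the denominators are nonzero).
   Context: Setting: $p,q\in\mathbb{C}$; $\tilde f(n,m)=f(n+1,m)$, $\hat f(n,m)=f(n,m+1)$, $\hat{\tilde f}(n,m)=f(n+1,m+1)$. $\Gamma=\mathrm{Diag}(\mathrm{Diag}(k_1,\dots,k_{N_1}),\Gamma_J^{[N_2]}(\kappa_2),\dots,\Gamma_J^{[N_s]}(\kappa_s))$ with $\Gamma^{[N]}_J(\kappa)$ the $N\times N$ matrix with $\kappa$ on the diagonal and $1$ on the subdiagonal; all eigenvalues $\lambda,\mu$ of $\Gamma$ satisfy $\lambda+\mu\ne0$, and $p,q\notin\{\pm\lambda\}$. $c=(c^{(1)},\dots,c^{(s)})$ a constant row vector (block lengths $N_1,\dots,N_s$). With $\rho(k)=\big(\tfrac{p+k}{p-k}\big)^n\big(\tfrac{q+k}{q-k}\big)^m\rho^0$ and $\rho_i=\rho(k_i)$: $r=(\rho_1,\dots,\rho_{N_1},r_J(\kappa_2),\dots,r_J(\kappa_s))^T$,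 $r_J(\kappa)=(\partial_k^l\rho/l!|_{k=\kappa})_{l=0}^{N_j-1}$; $M=\mathcal{A}FGH$ where $F=\mathrm{Diag}(\rho_1,\dots,\rho_{N_1},F_J(\kappa_2),\dots)$ with $F_J(\kappa)$ lower triangular, $(i,j)$ entry $\partial_k^{i-j}\rho|_{\kappa}/(i-j)!$; $H=\mathrm{Diag}(c_1,\dots,c_{N_1},H_J(c^{(2)}),\dots)$ with $H_J(d)$ having $(i,j)$ entry $d_{i+j-1}$ if $i+j-1\le N_j$ else $0$; $G$ symmetric block matrix with $G_{1,1}=(1/(k_i+k_j))$, $G_{1,j}$ with $(l,t)$ entry $-(-1/(k_l+\kappa_j))^t$, $G_{i,j}$ ($1<i\le j$) with $(l,t)$ entry $\binom{l+t-2}{l-1}(-1)^{l+t}/(\kappa_i+\kappa_j)^{l+t-1}$; and $r$ is replaced by $\mathcal{A}r$, where $\mathcal{A}=\mathrm{Diag}(I_{N_1},\mathcal{A}_2,\dots,\mathcal{A}_s)$, each $\mathcal{A}_j$ a constant lower triangular Toeplitz matrix. *)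

(* Defs.v *)
From HB Require Import structures.
From mathcomp Require Import all_boot all_order all_algebra.
Set Implicit Arguments. Unset Strict Implicit. Unset Printing Implicit Defensive.
Import Order.TTheory GRing.Theory Num.Theory.
Local Open Scope ring_scope.

Section NQC.
Variable C : numClosedFieldType.

(** A Jordan-type block: (kappa, c-vector, a-vector).  Its size N_j is the
    length of the c-vector; the a-vector is the first column of the constant
    lower-triangular Toeplitz matrix A_j. *)
Definition block := (C * seq C * seq C)%type.
Definition bk (B : block) : C := B.1.1.
Definition bc (B : block) : seq C := B.1.2.
Definition ba (B : block) : seq C := B.2.
Definition bsz (B : block) : nat := size (bc B).
Definition block0 : block := ((0, [::]), [::]).

(** All blocks: the diagonal part Diag(k_1..k_{N1}) is seen as N1 blocks of
    size 1 with c-entry c_i and with A-block 1 (since A = Diag(I_{N1},...)),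
    followed by the Jordan blocks. *)
Definition all_blocks (ks cs : seq C) (J : seq block) : seq block :=
  map (fun kc => ((kc.1, [:: kc.2]), [:: 1])) (zip ks cs) ++ J.

(** index i  |->  (block number, 0-based position inside the block) *)
Definition idx (BL : seq block) : seq (nat * nat) :=
  flatten [seq [seq (j, l) | l <- iota 0 (bsz (nth block0 BL j))]
          | j <- iota 0 (size BL)].
Definition dim (BL : seq block) : nat := size (idx BL).

Section Blocks.
Variable BL : seq block.
Definition blk (i : 'I_(dim BL)) : nat := (nth (0, 0)%N (idx BL) i).1.
Definition pos (i : 'I_(dim BL)) : nat := (nth (0, 0)%N (idx BL) i).2.
Definition blkof (i : 'I_(dim BL)) : block := nth block0 BL (blk i).
Definition kap (i : 'I_(dim BL)) : C := bk (blkof i).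
End Blocks.

Definition rderiv (f : {poly C} * {poly C}) : {poly C} * {poly C} :=
  (f.1^`() * f.2 - f.1 * f.2^`(), f.2 ^+ 2).
Definition taylor_rat (f : {poly C} * {poly C}) (l : nat) (x : C) : C :=
  let g := iter l rderiv f in (g.1.[x] / g.2.[x]) / (l`!)%:R.

Definition powfrac (u v : {poly C}) (n : int) : {poly C} * {poly C} :=
  match n with
  | Posz k => (u ^+ k, v ^+ k)
  | Negz k => (v ^+ k.+1, u ^+ k.+1)
  end.

Definition rho_frac (p q rho0 : C) (n m : int) : {poly C} * {poly C} :=
  let a := powfrac ('X + p%:P) (p%:P - 'X) n in
  let b := powfrac ('X + q%:P) (q%:P - 'X) m in
  (rho0%:P * a.1 * b.1, a.2 * b.2).

Definition tau (p q rho0 : C) (n m : int) (l : nat) (x : C) : C :=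
  taylor_rat (rho_frac p q rho0 n m) l x.

Section Matrices.
Variables (BL : seq block) (p q rho0 : C).
Local Notation N := (dim BL).
Local Notation blk := (@blk BL).
Local Notation pos := (@pos BL).
Local Notation kap := (@kap BL).
Local Notation blkof := (@blkof BL).

Definition Gam : 'M[C]_N :=
  \matrix_(i, j) if blk i == blk j then
                   (if pos i == pos j then kap i
                    else if pos i == (pos j).+1 then 1 else 0)
                 else 0.

Definition Fm (n m : int) : 'M[C]_N :=
  \matrix_(i, j) if (blk i == blk j) && (pos j <= pos i)%N
                 then tau p q rho0 n m (pos i - pos j) (kap i) else 0.

Definition Hm : 'M[C]_N :=
  \matrix_(i, j) if (blk i == blk j) && (pos i + pos j < bsz (blkof i))%N
                 then nth 0 (bc (blkof i)) (pos i + pos j) else 0.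

Definition Gm : 'M[C]_N :=
  \matrix_(i, j) ((binomial (pos i + pos j) (pos i))%:R * (-1) ^+ (pos i + pos j)
                   / (kap i + kap j) ^+ (pos i + pos j).+1).

Definition Am : 'M[C]_N :=
  \matrix_(i, j) if (blk i == blk j) && (pos j <= pos i)%N
                 then nth 0 (ba (blkof i)) (pos i - pos j) else 0.

Definition rv (n m : int) : 'cV[C]_N := \col_i tau p q rho0 n m (pos i) (kap i).

Definition cv : 'rV[C]_N := \row_j nth 0 (bc (blkof j)) (pos j).

Definition Mm (n m : int) : 'M[C]_N := Am *m Fm n m *m Gm *m Hm.

Definition Sab (a b : C) (n m : int) : C :=
  (cv *m invmx (b%:M + Gam) *m invmx (1%:M + Mm n m)
      *m invmx (a%:M + Gam) *m (Am *m rv n m)) 0 0.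

End Matrices.
End NQC.

(* Main.v *)
Require Import Defs.
From HB Require Import structures.
From mathcomp Require Import all_boot all_order all_algebra.
From mathcomp Require Import ring zify.
Import Order.TTheory GRing.Theory Num.Theory.
Local Open Scope ring_scope.


Section Abs.
Variables (F : fieldType) (N : nat).

Lemma invmx_comm (A B : 'M[F]_N) : A \in unitmx -> A *m B = B *m A ->
  invmx A *m B = B *m invmx A.
Proof.
move=> uA AB.
have -> : invmx A *m B = invmx A *m B *m (A *m invmx A) by rewrite mulmxV // mulmx1.
by rewrite !mulmxA -(mulmxA _ B) -AB mulmxA mulVmx // mul1mx.
Qed.

Lemma scal11 (X : 'M[F]_1) (k : nat) (v : 'M[F]_(k,1)) : v *m X = X 0 0 *: v.
Proof. by rewrite {1}[X]mx11_scalar mul_mx_scalar. Qed.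

Lemma scal11l (X : 'M[F]_1) (k : nat) (v : 'M[F]_(1,k)) : X *m v = X 0 0 *: v.
Proof. by rewrite {1}[X]mx11_scalar mul_scalar_mx. Qed.

Lemma e00D (X Y : 'M[F]_1) : (X + Y) 0 0 = X 0 0 + Y 0 0. Proof. by rewrite mxE. Qed.
Lemma e00B (X Y : 'M[F]_1) : (X - Y) 0 0 = X 0 0 - Y 0 0. Proof. by rewrite !mxE. Qed.
Lemma e00N (X : 'M[F]_1) : (- X) 0 0 = - X 0 0. Proof. by rewrite mxE. Qed.
Lemma e00Z k (X : 'M[F]_1) : (k *: X) 0 0 = k * X 0 0. Proof. by rewrite mxE. Qed.

Lemma comm_aG (a p : F) (G : 'M[F]_N) :
  (a%:M + G) *m ((p%:M : 'M_N) - G) = (p%:M - G) *m (a%:M + G).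
Proof.
rewrite mulmxDl mulmxBr mulmxBr mulmxBl mulmxDr mulmxDr.
rewrite !mul_scalar_mx !mul_mx_scalar !scale_scalar_mx mulrC.
by rewrite opprD !addrA (addrAC _ (- _)).
Qed.

Lemma fact_I (G U U' : 'M[F]_N) (r r' : 'cV[F]_N) (c : 'rV[F]_N) (a b p : F) :
 (a%:M + G) \in unitmx -> (b%:M + G) \in unitmx -> U \in unitmx -> U' \in unitmx ->
 (p%:M - G) *m r' = (p%:M + G) *m r ->
 (p%:M - G) *m U' - U *m (p%:M - G) = r *m c ->
 1 - (p + b) * (c *m invmx (b%:M + G) *m invmx U' *m invmx (a%:M + G) *m r') 0 0
   + (p - a) * (c *m invmx (b%:M + G) *m invmx U *m invmx (a%:M + G) *m r) 0 0
 = (1 - (c *m invmx U' *m invmx (a%:M + G) *m r') 0 0)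
   * (1 - (c *m invmx (b%:M + G) *m invmx U *m r) 0 0).
Proof.
move=> uA uB uU uU' hr h1.
set Ai := invmx (a%:M + G); set Bi := invmx (b%:M + G).
set x := invmx U' *m Ai *m r'.
set Y' := ((c *m x) 0 0 : F).
have QAi : (p%:M - G) *m Ai = Ai *m (p%:M - G).
  rewrite /Ai; apply/esym/invmx_comm => //.
  exact: comm_aG.
have AiP : Ai *m (p%:M + G) = (p - a) *: Ai + 1%:M.
  have -> : (p%:M + G : 'M_N) = (p - a)%:M + (a%:M + G).
    by rewrite addrA -raddfD subrK.
  by rewrite mulmxDr mul_mx_scalar /Ai mulVmx.
have BiQ : Bi *m (p%:M - G) = (p + b) *: Bi - 1%:M.
  have -> : (p%:M - G : 'M_N) = (p + b)%:M - (b%:M + G).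
    by rewrite opprD addrA -raddfB addrK.
  by rewrite mulmxBr mul_mx_scalar /Bi mulVmx.
have s1 : U *m ((p%:M - G) *m x) = (p - a) *: (Ai *m r) + (1 - Y') *: r.
  have UQ : U *m (p%:M - G) = (p%:M - G) *m U' - r *m c.
    by rewrite -h1 opprB [RHS]addrC subrK.
  rewrite mulmxA UQ mulmxBl -mulmxA.
  have -> : U' *m x = Ai *m r' by rewrite /x !mulmxA mulmxV // mul1mx.
  rewrite mulmxA QAi -mulmxA hr mulmxA AiP -mulmxA (scal11 (c *m x)) -/Y'.
  by rewrite mulmxDl mul1mx -scalemxAl (scalerBl _ _ r) scale1r addrA.
have s2 : c *m Bi *m ((p%:M - G) *m x)
    = c *m Bi *m invmx U *m ((p - a) *: (Ai *m r) + (1 - Y') *: r).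
  by rewrite -s1 -(mulmxA _ (invmx U)) (mulmxA (invmx U)) mulVmx // mul1mx.
move: s2; rewrite (mulmxA _ (p%:M - G)) -(mulmxA c) BiQ mulmxBr mulmx1.
rewrite mulmxDr -!scalemxAr mulmxBl -!scalemxAl => /(congr1 (fun X : 'M[F]_1 => X 0 0)).
rewrite !(e00D, e00B, e00N, e00Z) -/Y' => e.
rewrite /x in e. rewrite !mulmxA in e *.
have -> : (c *m invmx U' *m Ai *m r') 0 0 = Y' by rewrite /Y' /x !mulmxA.
move: e; move: ((c *m Bi *m invmx U' *m Ai *m r') 0 0) => S'.
move: ((c *m Bi *m invmx U *m Ai *m r) 0 0) => S.
move: ((c *m Bi *m invmx U *m r) 0 0) => W e.
have h : (1 - (p + b) * S' + (p - a) * S) - (1 - Y') * (1 - W)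
   = - (((p + b) * S' - Y') - ((p - a) * S + (1 - Y') * W)) by ring.
by apply/eqP; rewrite -subr_eq0 h e subrr oppr0.
Qed.

Lemma comm_aGp (a p : F) (G : 'M[F]_N) :
  (a%:M + G) *m ((p%:M : 'M_N) + G) = (p%:M + G) *m (a%:M + G).
Proof.
rewrite mulmxDl mulmxDr mulmxDr [RHS]mulmxDl mulmxDr mulmxDr.
rewrite !mul_scalar_mx !mul_mx_scalar !scale_scalar_mx mulrC.
by rewrite !addrA (addrAC _ (a *: G)).
Qed.

Lemma fact_II (G U U' : 'M[F]_N) (r r' : 'cV[F]_N) (c : 'rV[F]_N) (a b p : F) :
 (a%:M + G) \in unitmx -> (b%:M + G) \in unitmx -> U \in unitmx -> U' \in unitmx ->
 (p%:M - G) *m r' = (p%:M + G) *m r ->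
 U' *m (p%:M + G) - (p%:M + G) *m U = r' *m c ->
 1 - (p + a) * (c *m invmx (b%:M + G) *m invmx U' *m invmx (a%:M + G) *m r') 0 0
   + (p - b) * (c *m invmx (b%:M + G) *m invmx U *m invmx (a%:M + G) *m r) 0 0
 = (1 - (c *m invmx (b%:M + G) *m invmx U' *m r') 0 0)
   * (1 - (c *m invmx U *m invmx (a%:M + G) *m r) 0 0).
Proof.
move=> uA uB uU uU' hr h2.
set Ai := invmx (a%:M + G); set Bi := invmx (b%:M + G).
set z := c *m Bi *m invmx U'.
set W' := ((z *m r') 0 0 : F).
have PAi : (p%:M + G) *m Ai = Ai *m (p%:M + G).
  rewrite /Ai; apply/esym/invmx_comm => //; exact: comm_aGp.
have BiP : Bi *m (p%:M + G) = (p - b) *: Bi + 1%:M.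
  have -> : (p%:M + G : 'M_N) = (p - b)%:M + (b%:M + G).
    by rewrite addrA -raddfD subrK.
  by rewrite mulmxDr mul_mx_scalar /Bi mulVmx.
have AiQ : Ai *m (p%:M - G) = (p + a) *: Ai - 1%:M.
  have -> : (p%:M - G : 'M_N) = (p + a)%:M - (a%:M + G).
    by rewrite opprD addrA -raddfB addrK.
  by rewrite mulmxBr mul_mx_scalar /Ai mulVmx.
have s1 : z *m (p%:M + G) *m U = (p - b) *: (c *m Bi) + (1 - W') *: c.
  have PU : (p%:M + G) *m U = U' *m (p%:M + G) - r' *m c.
    by rewrite -h2 opprB [RHS]addrC subrK.
  rewrite -mulmxA PU mulmxBr mulmxA.
  have -> : z *m U' = c *m Bi by rewrite /z -mulmxA mulVmx // mulmx1.
  rewrite -mulmxA BiP mulmxA (scal11l (z *m r')) -/W'.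
  by rewrite mulmxDr mulmx1 -scalemxAr (scalerBl _ _ c) scale1r addrA.
have s2 : z *m (p%:M + G) *m Ai *m r
    = (z *m (p%:M + G) *m U) *m (invmx U *m Ai *m r).
  by rewrite !mulmxA -(mulmxA _ U) mulmxV // mulmx1.
move: s2; rewrite s1 -(mulmxA z) -(mulmxA z) PAi -(mulmxA Ai) -hr.
rewrite (mulmxA Ai) AiQ mulmxBl mul1mx -scalemxAl mulmxBr mulmxDl -!scalemxAl -!scalemxAr.
move=> /(congr1 (fun X : 'M[F]_1 => X 0 0)).
rewrite !(e00D, e00B, e00N, e00Z) -/W' => e.
rewrite /z !mulmxA in e *.
move: e; move: ((c *m Bi *m invmx U' *m Ai *m r') 0 0) => S'.
move: ((c *m Bi *m invmx U *m Ai *m r) 0 0) => S.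
move: ((c *m invmx U *m Ai *m r) 0 0) => Y e.
have h : (1 - (p + a) * S' + (p - b) * S) - (1 - W') * (1 - Y)
   = - (((p + a) * S' - W') - ((p - b) * S + (1 - W') * Y)) by ring.
by apply/eqP; rewrite -subr_eq0 h e subrr oppr0.
Qed.

End Abs.


Section Taylor.
Variable C : numClosedFieldType.
Implicit Types f g : {poly C} * {poly C}.
Local Notation rd := (@rderiv C).

Lemma rderiv_equiv f g : f.1 * g.2 = g.1 * f.2 ->
  (rderiv f).1 * (rderiv g).2 = (rderiv g).1 * (rderiv f).2.
Proof.
case: f g => A1 B1 [A2 B2] /= H.
have H' := congr1 deriv H; rewrite !derivM in H'.
apply/eqP; rewrite -subr_eq0; apply/eqP.
have -> : (A1^`() * B1 - A1 * B1^`()) * B2 ^+ 2 - (A2^`() * B2 - A2 * B2^`()) * B1 ^+ 2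
  = B1 * B2 * ((A1^`() * B2 + A1 * B2^`()) - (A2^`() * B1 + A2 * B1^`()))
    - (B1 * B2^`() + B1^`() * B2) * (A1 * B2 - A2 * B1) by ring.
by rewrite H' H !subrr !mulr0 subrr.
Qed.

Lemma iter_equiv f g l : f.1 * g.2 = g.1 * f.2 ->
  (iter l rd f).1 * (iter l rd g).2 = (iter l rd g).1 * (iter l rd f).2.
Proof. by move=> H; elim: l => [|l IH] //=; apply: rderiv_equiv. Qed.

Lemma iter_den f l : (iter l rd f).2 = f.2 ^+ (2 ^ l).
Proof.
elim: l => [|l IH] /=; first by rewrite expr1.
by rewrite IH -exprM expnS mulnC.
Qed.

Lemma iter_den_neq0 f l x : f.2.[x] != 0 -> (iter l rd f).2.[x] != 0.
Proof. by move=> h; rewrite iter_den horner_exp expf_neq0. Qed.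

Lemma taylor_equiv f g l x : f.1 * g.2 = g.1 * f.2 -> f.2.[x] != 0 -> g.2.[x] != 0 ->
  taylor_rat f l x = taylor_rat g l x.
Proof.
move=> H hf hg; rewrite /taylor_rat; congr (_ / _).
have := @iter_equiv f g l H => /(congr1 (horner^~ x)); rewrite !hornerM => e.
have hf' := @iter_den_neq0 f l x hf; have hg' := @iter_den_neq0 g l x hg.
by apply/eqP; rewrite eqr_div // e.
Qed.

Definition zt f l := if l is l'.+1 then (iter l' rd f).1 * (iter l' rd f).2 else 0.

Lemma iter_lin_den h f l : (iter l rd (h * f.1, f.2)).2 = (iter l rd f).2.
Proof. by rewrite !iter_den. Qed.

Lemma iter_lin (h : {poly C}) (be : C) f l : h^`() = be%:P ->
  (iter l rd (h * f.1, f.2)).1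
  = h * (iter l rd f).1 + (l%:R * be)%:P * zt f l.
Proof.
move=> hh; elim: l => [|l IH]; first by rewrite /= mul0r polyC0 mul0r addr0.
rewrite iterS [X in X.1]/rderiv /= IH iter_lin_den.
rewrite !derivD !derivM hh derivC mul0r add0r.
case: l IH => [|l] IH /=.
  rewrite mul0r polyC0 !mul0r !addr0 mul1r.
  move: (f.1) (f.2) (be%:P) => A B bP; move: (A^`()) (B^`()) => A' B'.
  ring.
rewrite !derivB !derivM.
set g0 := iter l rd f.
move: (g0.1) (g0.2) => A B.
move: (A^`()) (B^`()) ((A^`())^`()) ((B^`())^`()) => A' B' A'' B''.
rewrite -[(l.+2)%:R]natr1 -[(l.+1)%:R]natr1 !polyCM !polyCD !polyC1.
move: (l%:R%:P) (be%:P) => L bP.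
ring.
Qed.

Lemma natr_fact_neq0 n : (n`!)%:R != 0 :> C.
Proof. by rewrite pnatr_eq0 -lt0n fact_gt0. Qed.

Lemma taylor_lin (h : {poly C}) (be : C) f l x : h^`() = be%:P -> f.2.[x] != 0 ->
  taylor_rat (h * f.1, f.2) l x
  = h.[x] * taylor_rat f l x + be * (if l is l'.+1 then taylor_rat f l' x else 0).
Proof.
move=> hh hx; rewrite /taylor_rat /= iter_lin_den (iter_lin _ _ _ _ hh).
case: l => [|l] /=.
  by rewrite mul0r polyC0 mul0r addr0 mulr0 addr0 hornerM !mulrA.
set g0 := iter l rd f.
have hE : g0.2.[x] != 0 by apply: iter_den_neq0.
have hF := natr_fact_neq0 l.
have hl : (l.+1)%:R != 0 :> C by rewrite pnatr_eq0.
rewrite hornerD !hornerM hornerC factS natrM.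
move: (((g0.1)^`() * g0.2 - g0.1 * (g0.2)^`()).[x]) => A1.
move: (g0.1).[x] (g0.2).[x] hE => A B hE.
field.
by rewrite hF hE addrC natr1 hl.
Qed.

Lemma powfrac_shift (u v : {poly C}) (n : int) :
  v * (powfrac u v (n + 1)).1 * (powfrac u v n).2
  = u * (powfrac u v n).1 * (powfrac u v (n + 1)).2.
Proof.
case: n => [k|k].
  have -> : Posz k + 1 = Posz k.+1 by rewrite -addn1 PoszD.
  by rewrite /= !exprS; ring.
case: k => [|k].
  have -> : Negz 0 + 1 = Posz 0 by [].
  by rewrite /= !expr1 !expr0; ring.
have -> : Negz k.+1 + 1 = Negz k by rewrite !NegzE; lia.
by rewrite /= !exprS; ring.
Qed.

Lemma rho_shift_n (p q rho0 : C) (n m : int) :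
  ((p%:P - 'X) * (rho_frac p q rho0 (n + 1) m).1) * (rho_frac p q rho0 n m).2
  = (('X + p%:P) * (rho_frac p q rho0 n m).1) * (rho_frac p q rho0 (n + 1) m).2.
Proof.
rewrite /rho_frac /=.
have := powfrac_shift ('X + p%:P) (p%:P - 'X) n.
move: (powfrac ('X + p%:P) (p%:P - 'X) n) (powfrac ('X + p%:P) (p%:P - 'X) (n + 1)) => A A'.
move: (powfrac ('X + q%:P) (q%:P - 'X) m) => B e.
transitivity ((p%:P - 'X) * A'.1 * A.2 * (rho0%:P * B.1 * B.2)); first by ring.
by rewrite e; ring.
Qed.

Lemma rho_shift_m (p q rho0 : C) (n m : int) :
  ((q%:P - 'X) * (rho_frac p q rho0 n (m + 1)).1) * (rho_frac p q rho0 n m).2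
  = (('X + q%:P) * (rho_frac p q rho0 n m).1) * (rho_frac p q rho0 n (m + 1)).2.
Proof.
rewrite /rho_frac /=.
have := powfrac_shift ('X + q%:P) (q%:P - 'X) m.
move: (powfrac ('X + q%:P) (q%:P - 'X) m) (powfrac ('X + q%:P) (q%:P - 'X) (m + 1)) => B B'.
move: (powfrac ('X + p%:P) (p%:P - 'X) n) => A e.
transitivity ((q%:P - 'X) * B'.1 * B.2 * (rho0%:P * A.1 * A.2)); first by ring.
by rewrite e; ring.
Qed.

Lemma powfrac_den_neq0 (u v : {poly C}) (n : int) x :
  u.[x] != 0 -> v.[x] != 0 -> (powfrac u v n).2.[x] != 0.
Proof. by move=> hu hv; case: n => k /=; rewrite horner_exp expf_neq0. Qed.

Lemma rho_den_neq0 (p q rho0 : C) (n m : int) x :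
  p != x -> p != - x -> q != x -> q != - x -> (rho_frac p q rho0 n m).2.[x] != 0.
Proof.
move=> h1 h2 h3 h4.
have hu : forall z : C, z != - x -> ('X + z%:P).[x] != 0.
  by move=> z hz; rewrite !hornerE addrC addr_eq0.
have hv : forall z : C, z != x -> (z%:P - 'X).[x] != 0.
  by move=> z hz; rewrite !hornerE subr_eq0.
rewrite /rho_frac /= hornerM mulf_neq0 // powfrac_den_neq0 ?hu ?hv //.
Qed.

Lemma dXp (z : C) : ('X + z%:P)^`() = (1 : C)%:P.
Proof. by rewrite derivD derivX derivC addr0. Qed.

Lemma dpX (z : C) : (z%:P - 'X)^`() = (-1 : C)%:P.
Proof. by rewrite derivB derivX derivC sub0r polyCN. Qed.

Lemma tau_shift_n (p q rho0 : C) (n m : int) x :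
  p != x -> p != - x -> q != x -> q != - x -> forall d,
  (p - x) * tau p q rho0 (n + 1) m d x
    - (if d is d'.+1 then tau p q rho0 (n + 1) m d' x else 0)
  = (p + x) * tau p q rho0 n m d x
    + (if d is d'.+1 then tau p q rho0 n m d' x else 0).
Proof.
move=> h1 h2 h3 h4 d.
have hd := @rho_den_neq0 p q rho0 n m x h1 h2 h3 h4.
have hd' := @rho_den_neq0 p q rho0 (n + 1) m x h1 h2 h3 h4.
have e := @taylor_equiv ((p%:P - 'X) * (rho_frac p q rho0 (n + 1) m).1,
                          (rho_frac p q rho0 (n + 1) m).2)
                         (('X + p%:P) * (rho_frac p q rho0 n m).1,
                          (rho_frac p q rho0 n m).2) d x (rho_shift_n p q rho0 n m) hd' hd.
rewrite (taylor_lin _ _ _ _ _ (dpX p) hd') (taylor_lin _ _ _ _ _ (dXp p) hd) in e.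
rewrite /tau.
have hx1 : forall z : C, (z%:P - 'X).[x] = z - x by move=> z; rewrite !hornerE.
have hx2 : forall z : C, ('X + z%:P).[x] = z + x by move=> z; rewrite !hornerE addrC.
move: e; rewrite hx1 hx2.
case: d => [|d] /=; rewrite ?mulr0 ?addr0 ?subr0 ?mulN1r ?mul1r => e.
  by rewrite -e addrC.
by rewrite -e addrC.
Qed.

Lemma tau_shift_m (p q rho0 : C) (n m : int) x :
  p != x -> p != - x -> q != x -> q != - x -> forall d,
  (q - x) * tau p q rho0 n (m + 1) d x
    - (if d is d'.+1 then tau p q rho0 n (m + 1) d' x else 0)
  = (q + x) * tau p q rho0 n m d x
    + (if d is d'.+1 then tau p q rho0 n m d' x else 0).
Proof.
move=> h1 h2 h3 h4 d.
have hd := @rho_den_neq0 p q rho0 n m x h1 h2 h3 h4.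
have hd' := @rho_den_neq0 p q rho0 n (m + 1) x h1 h2 h3 h4.
have e := @taylor_equiv ((q%:P - 'X) * (rho_frac p q rho0 n (m + 1)).1,
                          (rho_frac p q rho0 n (m + 1)).2)
                         (('X + q%:P) * (rho_frac p q rho0 n m).1,
                          (rho_frac p q rho0 n m).2) d x (rho_shift_m p q rho0 n m) hd' hd.
rewrite (taylor_lin _ _ _ _ _ (dpX q) hd') (taylor_lin _ _ _ _ _ (dXp q) hd) in e.
rewrite /tau.
have hx1 : forall z : C, (z%:P - 'X).[x] = z - x by move=> z; rewrite !hornerE.
have hx2 : forall z : C, ('X + z%:P).[x] = z + x by move=> z; rewrite !hornerE addrC.
move: e; rewrite hx1 hx2.
case: d => [|d] /=; rewrite ?mulr0 ?addr0 ?subr0 ?mulN1r ?mul1r => e.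
  by rewrite -e addrC.
by rewrite -e addrC.
Qed.

End Taylor.


Section Pascal.
Variable C : numClosedFieldType.
Definition gco (s : C) (l t : nat) : C :=
  ('C(l + t, l))%:R * (-1) ^+ (l + t) / s ^+ (l + t).+1.

Lemma gpas (s : C) l t : s != 0 ->
  s * gco s l t + (if l is l'.+1 then gco s l' t else 0)
    + (if t is t'.+1 then gco s l t' else 0)
  = (l == 0%N)%:R * (t == 0%N)%:R.
Proof.
move=> hs; rewrite /gco.
case: l => [|L]; case: t => [|T] /=.
- by rewrite !addr0 bin0 !expr0 !mul1r expr1 mulrC mulVf // mul1r.
- rewrite !add0n !bin0 !exprS; have := expf_neq0 T hs; move: (s ^+ T) => e he.
  by field; rewrite hs he.
- rewrite !addn0 !binn !exprS; have := expf_neq0 L hs; move: (s ^+ L) => e he.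
  by field; rewrite hs he.
- rewrite !addSn !addnS binS natrD !exprS; have := expf_neq0 (L + T) hs.
  move: (s ^+ (L + T)) => e he.
  by field; rewrite hs he.
Qed.
End Pascal.

Section Idx.
Variable C : numClosedFieldType.
Variable BL : seq (block C).
Local Notation N := (Defs.dim BL).
Local Notation nb := (size BL).
Definition blkx (x : nat * nat) : block C := nth (block0 C) BL x.1.
Definition kx (x : nat * nat) : C := bk (blkx x).
Definition szj (j : nat) : nat := bsz (nth (block0 C) BL j).
Definition valid (x : nat * nat) := (x.1 < nb)%N && (x.2 < szj x.1)%N.
Definition ix (i : 'I_N) : nat * nat := nth (0, 0)%N (idx BL) i.

Lemma mem_idx_valid x : x \in idx BL -> valid x.
Proof.
rewrite /idx => /flattenP [s /mapP [j]]; rewrite mem_iota add0n => /andP [_ hj] ->.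
by move=> /mapP [l]; rewrite mem_iota add0n => /andP [_ hl] ->; rewrite /valid /= hj.
Qed.

Lemma ix_valid (i : 'I_N) : valid (ix i).
Proof. by apply: mem_idx_valid; rewrite /ix mem_nth. Qed.

Lemma sum_idx (h : nat * nat -> C) :
  \sum_(k < N) h (ix k) = \sum_(j < nb) \sum_(l < szj j) h (val j, val l).
Proof.
transitivity (\sum_(x <- idx BL) h x).
  by rewrite (big_nth (0,0)%N) big_mkord.
rewrite /idx big_flatten /= big_map.
have -> : iota 0 nb = index_iota 0 nb by rewrite /index_iota subn0.
rewrite big_mkord; apply: eq_bigr => j _; rewrite big_map.
have -> : iota 0 (bsz (nth (block0 C) BL j)) = index_iota 0 (szj j) by rewrite /index_iota subn0.
by rewrite big_mkord.
Qed.

Definition mxf (f : nat * nat -> nat * nat -> C) : 'M[C]_N :=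
  \matrix_(i, j) f (ix i) (ix j).
Definition colf (f : nat * nat -> C) : 'cV[C]_N := \col_i f (ix i).
Definition rowf (f : nat * nat -> C) : 'rV[C]_N := \row_j f (ix j).
Definition Sp (f g : nat * nat -> nat * nat -> C) x z :=
  \sum_(j < nb) \sum_(l < szj j) f x (val j, val l) * g (val j, val l) z.

Lemma mxf_mul f g : mxf f *m mxf g = mxf (Sp f g).
Proof.
apply/matrixP => i k; rewrite !mxE.
rewrite (eq_bigr (fun j => f (ix i) (ix j) * g (ix j) (ix k))); last by move=> j _; rewrite !mxE.
by rewrite (sum_idx (fun y => f (ix i) y * g y (ix k))).
Qed.

Lemma mxf_colf f h : mxf f *m colf h
  = colf (fun x => \sum_(j < nb) \sum_(l < szj j) f x (val j, val l) * h (val j, val l)).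
Proof.
apply/matrixP => i k; rewrite !mxE.
rewrite (eq_bigr (fun j => f (ix i) (ix j) * h (ix j))); last by move=> j _; rewrite !mxE.
by rewrite (sum_idx (fun y => f (ix i) y * h y)).
Qed.

Lemma rowf_mxf h f : rowf h *m mxf f
  = rowf (fun z => \sum_(j < nb) \sum_(l < szj j) h (val j, val l) * f (val j, val l) z).
Proof.
apply/matrixP => i k; rewrite !mxE.
rewrite (eq_bigr (fun j => h (ix j) * f (ix j) (ix k))); last by move=> j _; rewrite !mxE.
by rewrite (sum_idx (fun y => h y * f y (ix k))).
Qed.

Lemma colf_rowf h k : colf h *m rowf k = mxf (fun x y => h x * k y).
Proof. by apply/matrixP => i j; rewrite !mxE big_ord1 !mxE. Qed.

Lemma mxf_ext f g : (forall x z, valid x -> valid z -> f x z = g x z) -> mxf f = mxf g.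
Proof. by move=> H; apply/matrixP => i j; rewrite !mxE H // ix_valid. Qed.

Lemma colf_ext f g : (forall x, valid x -> f x = g x) -> colf f = colf g.
Proof. by move=> H; apply/matrixP => i j; rewrite !mxE H // ix_valid. Qed.

Lemma rowf_ext f g : (forall x, valid x -> f x = g x) -> rowf f = rowf g.
Proof. by move=> H; apply/matrixP => i j; rewrite !mxE H // ix_valid. Qed.

Lemma sum_blk (j0 : nat) (T : nat -> nat -> C) : (j0 < nb)%N ->
  (forall j l, j != j0 -> T j l = 0) ->
  \sum_(j < nb) \sum_(l < szj j) T (val j) (val l) = \sum_(l < szj j0) T j0 (val l).
Proof.
move=> hj H; rewrite (bigD1 (Ordinal hj)) //= [X in _ + X]big1 ?addr0 // => j hne.
apply: big1 => l _; apply: H.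
by apply: contra hne => /eqP e; apply/eqP/val_inj.
Qed.

Lemma sum_delta n a (F : nat -> C) :
  \sum_(l < n) (if val l == a then F (val l) else 0) = if (a < n)%N then F a else 0.
Proof.
case: ltnP => h.
  rewrite (bigD1 (Ordinal h)) //= eqxx [X in _ + X]big1 ?addr0 // => l hl.
  case: eqP => // e; case/eqP: hl; exact: val_inj.
apply: big1 => l _; case: eqP => // e; have := ltn_ord l; rewrite -[nat_of_ord l]/(val l) e => hl; exfalso; lia.
Qed.

Definition gamf (x y : nat * nat) : C :=
  if x.1 == y.1 then (if x.2 == y.2 then kx x else if x.2 == y.2.+1 then 1 else 0) else 0.

Lemma Gam_mxf : Gam BL = mxf gamf.
Proof. by apply/matrixP => i j; rewrite !mxE. Qed.

Lemma Gam_tr_mxf : (Gam BL)^T = mxf (fun x y => gamf y x).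
Proof. by apply/matrixP => i j; rewrite !mxE. Qed.

Lemma sum_down x (T : nat * nat -> C) : valid x ->
  \sum_(j < nb) \sum_(l < szj j) gamf x (val j, val l) * T (val j, val l)
  = kx x * T x + (if x.2 is l.+1 then T (x.1, l) else 0).
Proof.
case: x => j0 l0 /andP [/= hj hl].
rewrite (sum_blk j0 (fun j l => gamf (j0, l0) (j, l) * T (j, l)) hj); last first.
  by move=> j l hne; rewrite /gamf /= eq_sym (negbTE hne) mul0r.
rewrite (eq_bigr (fun l : 'I_(szj j0) =>
   (if val l == l0 then kx (j0, l0) * T (j0, val l) else 0)
   + (if l0 is l'.+1 then (if val l == l' then T (j0, val l) else 0) else 0))); last first.
  move=> l _; rewrite /gamf /= eqxx.
  case: l0 hl => [|l0] hl.
    case: eqP => [e|ne]; first by rewrite -e eqxx addr0.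
    by rewrite /= mul0r addr0; case: eqP => // e; case: ne.
  case: (eqVneq (val l) l0.+1) => [e|ne].
    rewrite e; have -> : (l0.+1 == l0) = false by lia.
    by rewrite addr0.
  rewrite add0r eqSS eq_sym.
  by case: eqP => _; rewrite ?mul1r ?mul0r.
rewrite big_split /= (sum_delta _ _ (fun v => kx (j0, l0) * T (j0, v))) hl.
case: l0 hl => [|l0] hl /=; first by rewrite big1 // addr0.
rewrite (sum_delta _ _ (fun v => T (j0, v))).
by have -> : (l0 < szj j0)%N by lia.
Qed.

Lemma sum_up z (T : nat * nat -> C) : valid z ->
  \sum_(j < nb) \sum_(l < szj j) gamf (val j, val l) z * T (val j, val l)
  = kx z * T z + (if (z.2.+1 < szj z.1)%N then T (z.1, z.2.+1) else 0).
Proof.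
case: z => j0 l0 /andP [/= hj hl].
rewrite (sum_blk j0 (fun j l => gamf (j, l) (j0, l0) * T (j, l)) hj); last first.
  by move=> j l hne; rewrite /gamf /= (negbTE hne) mul0r.
rewrite (eq_bigr (fun l : 'I_(szj j0) =>
   (if val l == l0 then kx (j0, l0) * T (j0, val l) else 0)
   + (if val l == l0.+1 then T (j0, val l) else 0))); last first.
  move=> l _; rewrite /gamf /= eqxx.
  case: eqP => [e|ne].
    rewrite e; have -> : (l0 == l0.+1) = false by lia.
    by rewrite addr0.
  by rewrite add0r; case: eqP => _; rewrite ?mul1r ?mul0r.
rewrite big_split /= (sum_delta _ _ (fun v => kx (j0, l0) * T (j0, v))) hl.
by rewrite (sum_delta _ _ (fun v => T (j0, v))).
Qed.

Definition toep (phi : nat -> nat -> C) (x y : nat * nat) : C :=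
  if (x.1 == y.1) && (y.2 <= x.2)%N then phi x.1 (x.2 - y.2)%N else 0.

Lemma toep_comm phi : Gam BL *m mxf (toep phi) = mxf (toep phi) *m Gam BL.
Proof.
rewrite Gam_mxf !mxf_mul; apply: mxf_ext => x z hx hz; rewrite /Sp.
rewrite (sum_down x (fun y => toep phi y z)) //.
rewrite (eq_bigr (fun j : 'I_nb => \sum_(l < szj j) gamf (val j, val l) z * toep phi x (val j, val l)));
  last by move=> j _; apply: eq_bigr => l _; rewrite mulrC.
rewrite (sum_up z (toep phi x)) //.
case: x z hx hz => [j l] [j' l'] /andP [/= hj hl] /andP [/= hj' hl'].
rewrite /toep /=.
case: (eqVneq j j') => [<-|ne].
  rewrite /kx /blkx /=; congr (_ + _).
  case: l hl => [|l] hl /=; first by case: ifP.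
  rewrite ltnS subSS; case: (leqP l' l) => h; last by case: ifP.
  by rewrite ifT //; lia.
rewrite /= !mulr0 add0r.
by case: l {hl} => [|l] /=; rewrite ?add0r; case: ifP.
Qed.

Definition e0c : 'cV[C]_N := colf (fun x => (x.2 == 0%N)%:R).
Definition e0r : 'rV[C]_N := rowf (fun x => (x.2 == 0%N)%:R).
Definition hf (x y : nat * nat) : C :=
  if (x.1 == y.1) && (x.2 + y.2 < szj x.1)%N then nth 0 (bc (blkx x)) (x.2 + y.2) else 0.
Definition gf (x y : nat * nat) : C := @gco C (kx x + kx y) x.2 y.2.

Lemma Hm_mxf : Hm BL = mxf hf.
Proof. by apply/matrixP => i j; rewrite !mxE. Qed.
Lemma Gm_mxf : Gm BL = mxf gf.
Proof. by apply/matrixP => i j; rewrite !mxE. Qed.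
Lemma Am_mxf : Am BL = mxf (toep (fun j d => nth 0 (ba (nth (block0 C) BL j)) d)).
Proof. by apply/matrixP => i j; rewrite !mxE. Qed.
Lemma Fm_mxf p q rho0 n m :
  Fm BL p q rho0 n m = mxf (toep (fun j d => tau p q rho0 n m d (bk (nth (block0 C) BL j)))).
Proof. by apply/matrixP => i j; rewrite !mxE. Qed.
Lemma rv_colf p q rho0 n m : rv BL p q rho0 n m = colf (fun x => tau p q rho0 n m x.2 (kx x)).
Proof. by apply/matrixP => i j; rewrite !mxE. Qed.
Lemma cv_rowf : cv BL = rowf (fun z => nth 0 (bc (blkx z)) z.2).
Proof. by apply/matrixP => i j; rewrite !mxE. Qed.

Lemma toep_e0 phi : mxf (toep phi) *m e0c = colf (fun x => phi x.1 x.2).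
Proof.
rewrite /e0c mxf_colf; apply: colf_ext => -[j0 l0] /andP [/= hj hl].
rewrite (sum_blk j0 (fun j l => toep phi (j0, l0) (j, l) * (l == 0%N)%:R) hj); last first.
  by move=> j l hne; rewrite /toep /= eq_sym (negbTE hne) mul0r.
rewrite (eq_bigr (fun l : 'I_(szj j0) =>
   if val l == 0%N then toep phi (j0, l0) (j0, val l) else 0)); last first.
  by move=> l _; case: eqP => _; rewrite ?mulr1 ?mulr0.
rewrite (sum_delta _ _ (fun v => toep phi (j0, l0) (j0, v))).
have -> : (0 < szj j0)%N by lia.
by rewrite /toep /= eqxx /= subn0.
Qed.

Lemma e0_H : e0r *m mxf hf = rowf (fun z => nth 0 (bc (blkx z)) z.2).
Proof.
rewrite /e0r rowf_mxf; apply: rowf_ext => -[j0 l0] /andP [/= hj hl].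
rewrite (sum_blk j0 (fun j l => (l == 0%N)%:R * hf (j, l) (j0, l0)) hj); last first.
  by move=> j l hne; rewrite /hf /= (negbTE hne) mulr0.
rewrite (eq_bigr (fun l : 'I_(szj j0) =>
   if val l == 0%N then hf (j0, val l) (j0, l0) else 0)); last first.
  by move=> l _; case: eqP => _; rewrite ?mul1r ?mul0r.
rewrite (sum_delta _ _ (fun v => hf (j0, v) (j0, l0))).
have -> : (0 < szj j0)%N by lia.
by rewrite /hf /= eqxx /= add0n hl.
Qed.

Lemma G_lem : (forall x z, valid x -> valid z -> kx x + kx z != 0) ->
  Gam BL *m mxf gf + mxf gf *m (Gam BL)^T = e0c *m e0r.
Proof.
move=> hs.
rewrite Gam_tr_mxf Gam_mxf !mxf_mul /e0c /e0r colf_rowf.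
apply/matrixP => i k; rewrite !mxE.
have hx := ix_valid i; have hz := ix_valid k.
move: (ix i) (ix k) hx hz => x z hx hz.
rewrite /Sp (sum_down x (fun y => gf y z)) //.
rewrite (eq_bigr (fun j : 'I_nb => \sum_(l < szj j) gamf z (val j, val l) * gf x (val j, val l)));
  last by move=> j _; apply: eq_bigr => l _; rewrite mulrC.
rewrite (sum_down z (gf x)) //.
have := @gpas C _ x.2 z.2 (hs x z hx hz).
case: x z {hx hz} => [j l] [j' t] /=.
rewrite /gf /kx /blkx /= => <-.
case: l => [|l]; case: t => [|t]; rewrite ?addr0; ring.
Qed.

Lemma H_lem : mxf hf *m Gam BL = (Gam BL)^T *m mxf hf.
Proof.
rewrite Gam_tr_mxf Gam_mxf !mxf_mul; apply: mxf_ext => x z hx hz; rewrite /Sp.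
rewrite (eq_bigr (fun j : 'I_nb => \sum_(l < szj j) gamf (val j, val l) z * hf x (val j, val l)));
  last by move=> j _; apply: eq_bigr => l _; rewrite mulrC.
rewrite (sum_up z (hf x)) // (sum_up x (fun y => hf y z)) //.
case: x z hx hz => [j l] [j' t] /andP [/= hj hl] /andP [/= hj' ht].
rewrite /hf /kx /blkx /=.
case: (eqVneq j j') => [<-|ne] /=; last by rewrite !mulr0 !add0r; case: ifP; case: ifP.
congr (_ + _).
rewrite addnS addSn.
case: (ltnP (l + t).+1 (szj j)) => h.
  by rewrite ifT ?ifT //; lia.
by case: ifP => // _; case: ifP.
Qed.

Lemma toep_prev psi j l l' : (l' <= l)%N ->
  (if l is L.+1 then toep psi (j, L) (j, l') else 0)
  = (if (l - l')%N is d'.+1 then psi j d' else 0).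
Proof.
move=> h; case: l h => [|L] h; first by have -> : l' = 0%N by lia.
rewrite /toep /= eqxx /=.
case: (leqP l' L) => h2.
  by rewrite subSn.
have -> : l' = L.+1 by lia.
by rewrite subnn.
Qed.

Lemma toep_disp (p : C) phi phi' :
  (forall j d, (j < nb)%N ->
    (p - bk (nth (block0 C) BL j)) * phi' j d - (if d is d'.+1 then phi' j d' else 0)
    = (p + bk (nth (block0 C) BL j)) * phi j d + (if d is d'.+1 then phi j d' else 0)) ->
  (p%:M - Gam BL) *m mxf (toep phi') = (p%:M + Gam BL) *m mxf (toep phi).
Proof.
move=> H.
rewrite mulmxBl mulmxDl !mul_scalar_mx Gam_mxf !mxf_mul.
apply/matrixP => i k; rewrite !mxE.
have hx := ix_valid i; have hz := ix_valid k.
move: (ix i) (ix k) hx hz => x z hx hz.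
rewrite /Sp (sum_down x (fun y => toep phi' y z)) // (sum_down x (fun y => toep phi y z)) //.
case: x z hx hz => [j l] [j' l'] /andP [/= hj hl] /andP [/= hj' hl'].
case: (eqVneq j j') => [<-|ne]; last first.
  rewrite /toep /= (negbTE ne) /= !mulr0.
  by case: l {hl} => [|l] /=; rewrite ?(negbTE ne) /= ?addr0 ?subr0.
case: (leqP l' l) => h; last first.
  rewrite /toep /= eqxx /= leqNgt h /= !mulr0.
  case: l {hl} h => [|l] h /=; rewrite ?addr0 ?subr0 //.
  by rewrite !ifF ?add0r ?subr0 ?oppr0 //; lia.
rewrite !toep_prev //.
have -> : toep phi' (j, l) (j, l') = phi' j (l - l')%N by rewrite /toep /= eqxx h.
have -> : toep phi (j, l) (j, l') = phi j (l - l')%N by rewrite /toep /= eqxx h.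
have := H j (l - l')%N hj; rewrite /kx /blkx /=.
move: (phi' j (l - l')%N) (phi j (l - l')%N) => A B.
move: (if (l - l')%N is d'.+1 then phi' j d' else 0) (if (l - l')%N is d'.+1 then phi j d' else 0) => A1 B1.
move: (bk (nth (block0 C) BL j)) => kk e.
have : p * A - (kk * A + A1) - (p * B + (kk * B + B1)) = ((p - kk) * A - A1) - ((p + kk) * B + B1) by ring.
rewrite e subrr => /eqP; rewrite subr_eq0 => /eqP.
done.
Qed.

End Idx.


Section Main.
Variable C : numClosedFieldType.
Variable BL : seq (block C).
Variables p q rho0 : C.
Local Notation N := (Defs.dim BL).
Local Notation nb := (size BL).
Local Notation G := (Gam BL).
Local Notation F n m := (Fm BL p q rho0 n m).
Local Notation A := (Am BL).
Local Notation M n m := (Mm BL p q rho0 n m).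
Local Notation r n m := (Am BL *m rv BL p q rho0 n m).

Hypothesis hk : forall j, (j < nb)%N -> let k := bk (nth (block0 C) BL j) in
  [/\ p != k, p != - k, q != k & q != - k].
Hypothesis hs : forall x z, valid C BL x -> valid C BL z -> kx C BL x + kx C BL z != 0.

Lemma comA : G *m A = A *m G.
Proof. by rewrite Am_mxf toep_comm. Qed.

Lemma comF n m : G *m F n m = F n m *m G.
Proof. by rewrite Fm_mxf toep_comm. Qed.

Lemma rvF n m : rv BL p q rho0 n m = F n m *m e0c C BL.
Proof. by rewrite Fm_mxf toep_e0 rv_colf. Qed.

Lemma cvH : cv BL = e0r C BL *m Hm BL.
Proof. by rewrite Hm_mxf e0_H cv_rowf. Qed.

Lemma syl n m : G *m M n m + M n m *m G = r n m *m cv BL.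
Proof.
rewrite /Mm.
have e1 : G *m (A *m F n m *m Gm BL *m Hm BL)
    = A *m F n m *m (G *m Gm BL) *m Hm BL.
  by rewrite !mulmxA comA -!mulmxA (mulmxA G) comF -!mulmxA.
have e2 : A *m F n m *m Gm BL *m Hm BL *m G
    = A *m F n m *m (Gm BL *m G^T) *m Hm BL.
  by rewrite -!mulmxA Hm_mxf H_lem -Hm_mxf.
rewrite e1 e2 -mulmxDl -mulmxDr Gm_mxf G_lem //.
by rewrite rvF cvH !mulmxA.
Qed.

Lemma zs1 (V : zmodType) (x y z : V) : x + y - (x + z) = y - z.
Proof. by rewrite [x + y]addrC addrKA. Qed.
Lemma zs2 (V : zmodType) (x y z : V) : x + y - (x - z) = y + z.
Proof. by rewrite [x + y]addrC addrKA opprK. Qed.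
Lemma zs3 (V : zmodType) (x y z : V) : x + y - (x - z) = z + y.
Proof. by rewrite zs2 addrC. Qed.

Lemma dispF_n n m : (p%:M - G) *m F (n + 1) m = (p%:M + G) *m F n m.
Proof.
rewrite !Fm_mxf; apply: toep_disp => j d hj.
have := @hk j hj => /= -[h1 h2 h3 h4].
exact: tau_shift_n.
Qed.

Lemma dispF_m n m : (q%:M - G) *m F n (m + 1) = (q%:M + G) *m F n m.
Proof.
rewrite !Fm_mxf; apply: toep_disp => j d hj.
have := @hk j hj => /= -[h1 h2 h3 h4].
exact: tau_shift_m.
Qed.

Lemma comAm (s : C) : (s%:M - G) *m A = A *m (s%:M - G).
Proof. by rewrite mulmxBl mulmxBr comA scalar_mxC. Qed.
Lemma comAp (s : C) : (s%:M + G) *m A = A *m (s%:M + G).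
Proof. by rewrite mulmxDl mulmxDr comA scalar_mxC. Qed.

Lemma disp_gen (s : C) n m n' m' :
  (s%:M - G) *m F n' m' = (s%:M + G) *m F n m ->
  (s%:M - G) *m r n' m' = (s%:M + G) *m r n m /\
  (s%:M - G) *m M n' m' = (s%:M + G) *m M n m.
Proof.
move=> hF; split.
  by rewrite !mulmxA comAm comAp -!mulmxA !rvF !mulmxA -(mulmxA A) hF mulmxA.
by rewrite /Mm !mulmxA comAm comAp -!mulmxA (mulmxA _ (F n' m')) hF !mulmxA.
Qed.

Lemma h1gen (s : C) n m n' m' :
  (s%:M - G) *m M n' m' = (s%:M + G) *m M n m ->
  (s%:M - G) *m (1%:M + M n' m') - (1%:M + M n m) *m (s%:M - G) = r n m *m cv BL.
Proof.
move=> hM.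
rewrite mulmxDr mulmx1 mulmxDl mul1mx zs1 hM -syl.
by rewrite mulmxDl mulmxBr mul_scalar_mx mul_mx_scalar zs2.
Qed.

Lemma h2gen (s : C) n m n' m' :
  (s%:M - G) *m M n' m' = (s%:M + G) *m M n m ->
  (1%:M + M n' m') *m (s%:M + G) - (s%:M + G) *m (1%:M + M n m) = r n' m' *m cv BL.
Proof.
move=> hM.
rewrite mulmxDl mul1mx mulmxDr mulmx1 zs1 -hM -syl.
by rewrite mulmxDr mulmxBl mul_scalar_mx mul_mx_scalar zs3.
Qed.

Lemma nqc_main (a b : C) :
  (a%:M + G) \in unitmx -> (b%:M + G) \in unitmx ->
  (forall n m : int, (1%:M + M n m) \in unitmx) ->
  forall n m : int,
    let S := fun n' m' => Sab BL p q rho0 a b n' m' in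
    1 - (q + b) * S (n + 1) (m + 1) + (q - a) * S (n + 1) m != 0 ->
    1 - (p + a) * S (n + 1) m + (p - b) * S n m != 0 ->
    (1 - (p + b) * S (n + 1) (m + 1) + (p - a) * S n (m + 1))
      / (1 - (q + b) * S (n + 1) (m + 1) + (q - a) * S (n + 1) m)
    = (1 - (q + a) * S n (m + 1) + (q - b) * S n m)
      / (1 - (p + a) * S (n + 1) m + (p - b) * S n m).
Proof.
move=> uA uB uU n m S.
have [hrp00 hMp00] := @disp_gen _ _ _ _ _ (dispF_n n m).
have [hrp01 hMp01] := @disp_gen _ _ _ _ _ (dispF_n n (m + 1)).
have [hrq00 hMq00] := @disp_gen _ _ _ _ _ (dispF_m n m).
have [hrq10 hMq10] := @disp_gen _ _ _ _ _ (dispF_m (n + 1) m).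
have e1 := @fact_I _ _ _ _ _ _ _ _ _ _ _ uA uB (uU _ _) (uU _ _) hrp01 (@h1gen _ _ _ _ _ hMp01).
have e2 := @fact_I _ _ _ _ _ _ _ _ _ _ _ uA uB (uU _ _) (uU _ _) hrq10 (@h1gen _ _ _ _ _ hMq10).
have e3 := @fact_II _ _ _ _ _ _ _ _ _ _ _ uA uB (uU _ _) (uU _ _) hrq00 (@h2gen _ _ _ _ _ hMq00).
have e4 := @fact_II _ _ _ _ _ _ _ _ _ _ _ uA uB (uU _ _) (uU _ _) hrp00 (@h2gen _ _ _ _ _ hMp00).
rewrite /S /Sab e1 e2 e3 e4.
rewrite !mulf_eq0 !negb_or => /andP [hY hW] /andP [_ hY0].
field.
by rewrite hY hW hY0.
Qed.

End Main.

Theorem mainTheorem11 (C : numClosedFieldType) (p q rho0 a b : C)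
  (ks cs : seq C) (J : seq (block C)) :
  size ks = size cs ->
  all (fun B => (0 < bsz B)%N && (size (ba B) == bsz B)) J ->
  (forall lam mu, lam \in map (@bk C) (all_blocks ks cs J) ->
     mu \in map (@bk C) (all_blocks ks cs J) -> lam + mu != 0) ->
  (forall lam, lam \in map (@bk C) (all_blocks ks cs J) ->
     [/\ p != lam, p != - lam, q != lam & q != - lam]) ->
  (a%:M + Gam (all_blocks ks cs J)) \in unitmx ->
  (b%:M + Gam (all_blocks ks cs J)) \in unitmx ->
  (forall n m : int, (1%:M + Mm (all_blocks ks cs J) p q rho0 n m) \in unitmx) ->
  forall n m : int,
    let S := fun n' m' => Sab (all_blocks ks cs J) p q rho0 a b n' m' in
    let S0 := S n m in
    let St := S (n + 1) m in
    let Sh := S n (m + 1) in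
    let Sht := S (n + 1) (m + 1) in
    1 - (q + b) * Sht + (q - a) * St != 0 ->
    1 - (p + a) * St + (p - b) * S0 != 0 ->
    (1 - (p + b) * Sht + (p - a) * Sh) / (1 - (q + b) * Sht + (q - a) * St)
    = (1 - (q + a) * Sh + (q - b) * S0) / (1 - (p + a) * St + (p - b) * S0).
Proof.
move=> _ _ hsum hpq uA uB uU n m.
have hk : forall j, (j < size (all_blocks ks cs J))%N ->
    let k := bk (nth (block0 C) (all_blocks ks cs J) j) in
    [/\ p != k, p != - k, q != k & q != - k].
  by move=> j hj /=; apply: hpq; apply: map_f; apply: mem_nth.
have hs : forall x z, valid C (all_blocks ks cs J) x -> valid C (all_blocks ks cs J) z ->
    kx C (all_blocks ks cs J) x + kx C (all_blocks ks cs J) z != 0.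
  move=> x z /andP [hx _] /andP [hz _]; apply: hsum; apply: map_f; exact: mem_nth.
exact: (@nqc_main C (all_blocks ks cs J) p q rho0 hk hs a b uA uB uU n m).
Qed.
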